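(* Let $V$ be an $\mathrm{FI}_G$-module with $\deg(V)<\infty$. Then $hd_i(V)\le i+\deg(V)$ for all $i\ge1$.
   Context: Fix a commutative ring $k$ and a group $G$. $\mathrm{FI}_G$ is the category with objects $[n]$ ($n\ge0$) and morphisms $[n]\to[m]$ the pairs $(f,g)$ with $f$ injective and $g:[n]\to G$ a map of sets; composition $(f,g)\circ(f',g')=(f\circ f',h)$, $h(x)=g'(x)\,g(f'(x))$. An $\mathrm{FI}_G$-module is a functor $V:\mathrm{FI}_G\to\mathrm{Mod}_k$, $V_n=V([n])$. $\deg V=\sup\{n:V_n\ne0\}$ ($\sup\emptyset=-\infty$). $H_0(V)_n=V_n/V_{<n}$ ($V_{<n}$ = span of images of all $V(f,g)$ with $(f,g):[m]\to[n]$, $m<n$); $H_i$ are the left derived functors of $H_0$; $hd_i(V)=\deg H_i(V)$. *)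

(* Defs.v *)
From HB Require Import structures.
From mathcomp Require Import all_boot all_order all_algebra.
Set Implicit Arguments. Unset Strict Implicit. Unset Printing Implicit Defensive.
Import GRing.Theory.
Local Open Scope ring_scope.

(* The category FI_G.  Objects: [n] = 'I_n.  A morphism [n] -> [m] is a     *)
(* pair (f, g) with f : 'I_n -> 'I_m injective and g : 'I_n -> G.          *)

Definition FIG_comp (G : groupType) (n m l : nat)
  (f : {ffun 'I_m -> 'I_l}) (g : {ffun 'I_m -> G})
  (f' : {ffun 'I_n -> 'I_m}) (g' : {ffun 'I_n -> G})
  : {ffun 'I_n -> 'I_l} * {ffun 'I_n -> G} :=
  ([ffun x => f (f' x)], [ffun x => monoid.mul (g' x) (g (f' x))]).

(* An FI_G-module over the commutative ring k: a functor FI_G -> Mod_k.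
   [act f g] is V(f,g); it is only meaningful (and only constrained) for
   injective f, i.e. for genuine morphisms of FI_G. *)
Record FIGmod (k : comPzRingType) (G : groupType) := FIGModule {
  FIGsp :> nat -> lmodType k;
  FIGact : forall n m, {ffun 'I_n -> 'I_m} -> {ffun 'I_n -> G} ->
             FIGsp n -> FIGsp m;
  FIGact_add : forall n m (f : {ffun 'I_n -> 'I_m}) (g : {ffun 'I_n -> G}) (x y : FIGsp n), injective f ->
      @FIGact n m f g (x + y) = FIGact f g x + FIGact f g y;
  FIGact_scale : forall n m (f : {ffun 'I_n -> 'I_m}) (g : {ffun 'I_n -> G}) (a : k) (x : FIGsp n), injective f ->
      @FIGact n m f g (a *: x) = a *: FIGact f g x;
  FIGact_id : forall n (x : FIGsp n),
      @FIGact n n [ffun i => i] [ffun=> monoid.one] x = x;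
  FIGact_comp : forall n m l (f : {ffun 'I_m -> 'I_l}) (g : {ffun 'I_m -> G})
      (f' : {ffun 'I_n -> 'I_m}) (g' : {ffun 'I_n -> G}) (x : FIGsp n),
      injective f -> injective f' ->
      @FIGact m l f g (@FIGact n m f' g' x) =
      FIGact (FIG_comp f g f' g').1 (FIG_comp f g f' g').2 x
}.

Arguments FIGact {k G} _ {n m}.

Record FIGhom (k : comPzRingType) (G : groupType) (V W : FIGmod k G) :=
  FIGHom {
  FIGfun :> forall n, V n -> W n;
  FIGfun_add : forall n (x y : V n), FIGfun (x + y) = FIGfun x + FIGfun y;
  FIGfun_scale : forall n (a : k) (x : V n), FIGfun (a *: x) = a *: FIGfun x;
  FIGfun_nat : forall n m (f : {ffun 'I_n -> 'I_m}) (g : {ffun 'I_n -> G}) (x : V n), injective f ->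
      FIGfun (FIGact V f g x) = FIGact W f g (FIGfun x)
}.

Definition FIGsurj k G (V W : FIGmod k G) (a : FIGhom V W) : Prop :=
  forall n (y : W n), exists x : V n, a n x = y.

Definition FIGprojective k G (P : FIGmod k G) : Prop :=
  forall (V W : FIGmod k G) (a : FIGhom V W) (b : FIGhom P W),
    FIGsurj a ->
    exists c : FIGhom P V, forall n (x : P n), a n (c n x) = b n x.

Definition FIGexact k G (U V W : FIGmod k G) (a : FIGhom U V) (b : FIGhom V W)
  : Prop :=
  forall n (x : V n), b n x = 0 <-> exists y : U n, a n y = x.

Record FIGprojres k G (V : FIGmod k G) := FIGProjRes {
  pr_obj : nat -> FIGmod k G;
  pr_d : forall i, FIGhom (pr_obj i.+1) (pr_obj i);
  pr_aug : FIGhom (pr_obj 0) V;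
  pr_proj : forall i, FIGprojective (pr_obj i);
  pr_aug_surj : FIGsurj pr_aug;
  pr_exact0 : FIGexact (pr_d 0) pr_aug;
  pr_exactS : forall i, FIGexact (pr_d i.+1) (pr_d i)
}.

Inductive FIGlower k G (V : FIGmod k G) (n : nat) : V n -> Prop :=
  | FIGlower_img : forall m (f : {ffun 'I_m -> 'I_n}) (g : {ffun 'I_m -> G})
        (x : V m), (m < n)%N -> injective f -> FIGlower (FIGact V f g x)
  | FIGlower_0 : FIGlower 0
  | FIGlower_add : forall x y, FIGlower x -> FIGlower y -> FIGlower (x + y)
  | FIGlower_scale : forall (a : k) x, FIGlower x -> FIGlower (a *: x).

(* H_0(V)_n = V_n / V_{<n}.  For a projective resolution P of V, the
   homology H_i(V) is the i-th homology of the complex H_0(P_.).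
   [FIGhomol_vanish R i n] says: the degree-n part of the i-th homology of
   H_0(P_.) is zero, i.e. every class x in H_0(P_i)_n with
   d(x) = 0 in H_0(P_{i-1})_n is the image of a class of H_0(P_{i+1})_n. *)
Definition FIGcycle0 k G (V : FIGmod k G) (R : FIGprojres V) (i n : nat)
  (x : pr_obj R i n) : Prop :=
  match i return pr_obj R i n -> Prop with
  | 0 => fun _ => True
  | i'.+1 => fun x => FIGlower (pr_d R i' n x)
  end x.

Definition FIGhomol_vanish k G (V : FIGmod k G) (R : FIGprojres V)
  (i n : nat) : Prop :=
  forall x : pr_obj R i n, FIGcycle0 x ->
    exists (y : pr_obj R i.+1 n) (z : pr_obj R i n),
      FIGlower z /\ x = pr_d R i n y + z.

(* Degrees with values in {-oo} u N, encoded as option nat (None = -oo). *)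
Definition leo (a b : option nat) : bool :=
  match a, b with
  | None, _ => true
  | Some _, None => false
  | Some x, Some y => (x <= y)%N
  end.

Definition addno (i : nat) (d : option nat) : option nat :=
  match d with None => None | Some e => Some (i + e)%N end.

Definition FIGdeg_is k G (V : FIGmod k G) (d : option nat) : Prop :=
  (forall n, (exists x : V n, x <> 0) -> leo (Some n) d) /\
  (forall e, (forall n, (exists x : V n, x <> 0) -> leo (Some n) e) -> leo d e).

Definition FIGhd_le k G (V : FIGmod k G) (R : FIGprojres V) (i : nat)
  (b : option nat) : Prop :=
  forall n, ~~ leo (Some n) b -> FIGhomol_vanish R i n.

(* Main.v *)
Require Import Defs.
From HB Require Import structures.
From mathcomp Require Import all_boot all_order all_algebra.
From mathcomp Require Import zify.
Set Implicit Arguments. Unset Strict Implicit. Unset Printing Implicit Defensive.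
Import GRing.Theory.
Local Open Scope ring_scope.

Section Basics.
Variables (k : comPzRingType) (G : groupType).
Implicit Types (U V W : FIGmod k G).

Lemma act0 V n m (f : {ffun 'I_n -> 'I_m}) g : injective f -> FIGact V f g 0 = 0.
Proof. by move=> fi; rewrite -(scale0r (0 : V n)) FIGact_scale // scale0r. Qed.

Lemma actN V n m (f : {ffun 'I_n -> 'I_m}) g x : injective f -> FIGact V f g (- x) = - FIGact V f g x.
Proof. by move=> fi; rewrite -scaleN1r FIGact_scale // scaleN1r. Qed.

Lemma act_sum V n m (f : {ffun 'I_n -> 'I_m}) g I (r : seq I) (P : pred I) (F : I -> V n) :
  injective f -> FIGact V f g (\sum_(i <- r | P i) F i) = \sum_(i <- r | P i) FIGact V f g (F i).
Proof.
move=> fi; apply: (big_morph (FIGact V f g)); first by move=> x y; rewrite FIGact_add.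
exact: act0.
Qed.

Lemma hom0 V W (h : FIGhom V W) n : h n 0 = 0.
Proof. by rewrite -(scale0r (0 : V n)) FIGfun_scale scale0r. Qed.

Lemma homN V W (h : FIGhom V W) n x : h n (- x) = - h n x.
Proof. by rewrite -scaleN1r FIGfun_scale scaleN1r. Qed.

Lemma homB V W (h : FIGhom V W) n x y : h n (x - y) = h n x - h n y.
Proof. by rewrite FIGfun_add homN. Qed.

Lemma hom_sum V W (h : FIGhom V W) n I (r : seq I) (P : pred I) (F : I -> V n) :
  h n (\sum_(i <- r | P i) F i) = \sum_(i <- r | P i) h n (F i).
Proof.
apply: (big_morph (h n)); first by move=> x y; rewrite FIGfun_add.
exact: hom0.
Qed.

Lemma lower_sum V n I (r : seq I) (P : pred I) (F : I -> V n) :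
  (forall i, P i -> FIGlower (F i)) -> FIGlower (\sum_(i <- r | P i) F i).
Proof.
move=> H; apply: (big_ind (@FIGlower _ _ V n)) => //.
- exact: FIGlower_0.
- by move=> x y; apply: FIGlower_add.
Qed.

Lemma lower_hom V W (h : FIGhom V W) n (x : V n) : FIGlower x -> FIGlower (h n x).
Proof.
elim=> {x}.
- by move=> m f g x mn fi; rewrite FIGfun_nat //; apply: FIGlower_img.
- by rewrite hom0; apply: FIGlower_0.
- by move=> x y _ Hx _ Hy; rewrite FIGfun_add; apply: FIGlower_add.
- by move=> a x _ Hx; rewrite FIGfun_scale; apply: FIGlower_scale.
Qed.

Definition dsum_sp V W (n : nat) : lmodType k := (V n * W n)%type.
Definition dsum_act V W n m (f : {ffun 'I_n -> 'I_m}) (g : {ffun 'I_n -> G})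
  (x : dsum_sp V W n) : dsum_sp V W m := (FIGact V f g x.1, FIGact W f g x.2).

Lemma dsum_add V W n m (f : {ffun 'I_n -> 'I_m}) g (x y : dsum_sp V W n) : injective f ->
  dsum_act f g (x + y) = dsum_act f g x + dsum_act f g y.
Proof. by move=> fi; rewrite /dsum_act /= !FIGact_add. Qed.

Lemma dsum_scale V W n m (f : {ffun 'I_n -> 'I_m}) g a (x : dsum_sp V W n) : injective f ->
  dsum_act f g (a *: x) = a *: dsum_act f g x.
Proof. by move=> fi; rewrite /dsum_act /= !FIGact_scale. Qed.

Lemma dsum_id V W n (x : dsum_sp V W n) : dsum_act [ffun i => i] [ffun=> 1%g] x = x.
Proof. by rewrite /dsum_act !FIGact_id; case: x. Qed.

Lemma dsum_comp V W n m l (f : {ffun 'I_m -> 'I_l}) g (f' : {ffun 'I_n -> 'I_m}) g'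
  (x : dsum_sp V W n) : injective f -> injective f' ->
  dsum_act f g (dsum_act f' g' x) =
  dsum_act (FIG_comp f g f' g').1 (FIG_comp f g f' g').2 x.
Proof. by move=> fi fi'; rewrite /dsum_act /= !FIGact_comp. Qed.

Definition dsum V W : FIGmod k G :=
  @FIGModule k G (dsum_sp V W) (@dsum_act V W) (@dsum_add V W) (@dsum_scale V W)
    (@dsum_id V W) (@dsum_comp V W).

Definition hcomp U V W (h1 : FIGhom V W) (h2 : FIGhom U V) : FIGhom U W.
Proof.
apply: (@FIGHom k G U W (fun n x => h1 n (h2 n x))).
- by move=> n x y; rewrite !FIGfun_add.
- by move=> n a x; rewrite !FIGfun_scale.
- by move=> n m f g x fi; rewrite !FIGfun_nat.
Defined.

Definition hsub V W (h1 h2 : FIGhom V W) : FIGhom V W.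
Proof.
apply: (@FIGHom k G V W (fun n x => h1 n x - h2 n x)).
- by move=> n x y; rewrite !FIGfun_add addrACA opprD.
- by move=> n a x; rewrite !FIGfun_scale scalerBr.
- by move=> n m f g x fi; rewrite !FIGfun_nat // -actN // FIGact_add.
Defined.

Definition hid V : FIGhom V V.
Proof. by apply: (@FIGHom k G V V (fun n x => x)). Defined.

Definition hcopair U V W (h1 : FIGhom V U) (h2 : FIGhom W U) : FIGhom (dsum V W) U.
Proof.
apply: (@FIGHom k G (dsum V W) U (fun n x => h1 n x.1 + h2 n x.2)).
- by move=> n x y /=; rewrite !FIGfun_add addrACA.
- by move=> n a x /=; rewrite !FIGfun_scale scalerDr.
- by move=> n m f g x fi /=; rewrite !FIGfun_nat // FIGact_add.
Defined.

Definition hinl V W : FIGhom V (dsum V W).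
Proof.
apply: (@FIGHom k G V (dsum V W) (fun n x => (x, 0))).
- by move=> n x y /=; congr pair; rewrite addr0.
- by move=> n a x /=; congr pair; rewrite scaler0.
- by move=> n m f g x fi /=; rewrite /dsum_act /= act0.
Defined.

End Basics.
Section Split.
Variables (k : comPzRingType) (G : groupType).

Definition hfst V W : FIGhom (@dsum k G V W) V.
Proof.
apply: (@FIGHom k G (dsum V W) V (fun n x => x.1)) => //.
Defined.

Variables (V : FIGmod k G) (R : FIGprojres V).
Hypothesis V0 : forall n (v : V n), v = 0.

Lemma split_step j : exists s : FIGhom (pr_obj R j) (pr_obj R j.+1),
  forall n (y : pr_obj R j.+1 n), pr_d R j n (s n (pr_d R j n y)) = pr_d R j n y.
Proof.
elim: j => [|j [s Hs]].
  have sur : FIGsurj (pr_d R 0).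
    move=> n z; have [H _] := pr_exact0 z.
    by apply: H; apply: V0.
  have [c Hc] := @pr_proj _ _ _ R 0 _ _ (pr_d R 0) (hid _) sur.
  by exists c => n y; rewrite Hc.
set a := hcopair (pr_d R j.+1) (hcomp s (pr_d R j)).
have sur : FIGsurj a.
  move=> n w.
  have : pr_d R j n (w - s n (pr_d R j n w)) = 0 by rewrite homB Hs subrr.
  move/(proj1 (pr_exactS (w - s n (pr_d R j n w)))) => [y Hy].
  by exists (y, w); rewrite /= Hy subrK.
have [c Hc] := @pr_proj _ _ _ R j.+1 _ _ a (hsub (hid _) (hcomp s (pr_d R j))) sur.
exists (hcomp (hfst _ _) c) => n y /=.
set w := pr_d R j.+1 n y.
have dw : pr_d R j n w = 0 by apply: (proj2 (pr_exactS w)); exists y.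
have := Hc n w; rewrite /= dw hom0 subr0.
case: (c n w) => t u /= E.
have : pr_d R j n (s n (pr_d R j n u)) = 0.
  have := congr1 (pr_d R j n) E.
  rewrite FIGfun_add dw.
  have -> : pr_d R j n (pr_d R j.+1 n t) = 0 by apply: (proj2 (pr_exactS _)); exists t.
  by rewrite add0r.
rewrite Hs => du.
by move: E; rewrite du hom0 addr0.
Qed.

Lemma vanish_V0 j n : FIGhomol_vanish R j.+1 n.
Proof.
move=> x /= Hx.
have [s Hs] := split_step j.
have : pr_d R j n (x - s n (pr_d R j n x)) = 0 by rewrite homB Hs subrr.
move/(proj1 (pr_exactS _)) => [y Hy].
exists y, (s n (pr_d R j n x)); split; first exact: lower_hom.
by rewrite Hy subrK.
Qed.

End Split.
Section Koszul.
Variables (k : comPzRingType) (G : groupType).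
Implicit Types (M : FIGmod k G).

Definition Sb (n q : nat) := {S : {set 'I_n} | #|S| == q}.
Definition emb n q (S : Sb n q) (i : 'I_q) : 'I_n :=
  enum_val (cast_ord (esym (eqP (valP S))) i).

Lemma embP n q (S : Sb n q) i : emb S i \in val S.
Proof. exact: enum_valP. Qed.

Lemma emb_inj n q (S : Sb n q) : injective (emb S).
Proof. by move=> i j /enum_val_inj /cast_ord_inj. Qed.

Definition rank_of n q (S : Sb n q) x (H : x \in val S) : 'I_q :=
  cast_ord (eqP (valP S)) (enum_rank_in H x).

Lemma emb_rank n q (S : Sb n q) x (H : x \in val S) : emb S (rank_of H) = x.
Proof. by rewrite /emb /rank_of cast_ordK enum_rankK_in. Qed.

Lemma emb_val n q (S : Sb n q) (i : 'I_q) x0 : emb S i = nth x0 (enum (val S)) i.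
Proof. by rewrite /emb (enum_val_nth x0). Qed.

Definition incl n q p (S : Sb n q) (S' : Sb n p.+1) : {ffun 'I_q -> 'I_p.+1} :=
  [ffun i => insubd ord0 (index (emb S i) (enum (val S')))].

Lemma incl_emb n q p (S : Sb n q) (S' : Sb n p.+1) i :
  val S \subset val S' -> emb S' (incl S S' i) = emb S i.
Proof.
move=> sub; rewrite (emb_val _ _ (emb S i)) ffunE.
have Hin : emb S i \in enum (val S') by rewrite mem_enum (subsetP sub) ?embP.
rewrite insubdK ?nth_index //.
by rewrite unfold_in /= -[ltnRHS](eqP (valP S')) cardE index_mem.
Qed.

Lemma incl_inj n q p (S : Sb n q) (S' : Sb n p.+1) :
  val S \subset val S' -> injective (incl S S').
Proof.
move=> sub i j E; apply: (emb_inj (S := S)).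
by rewrite -!(incl_emb _ sub) E.
Qed.

Lemma ffun_emb_inj n q m (S : Sb n q) (f1 f2 : {ffun 'I_m -> 'I_q}) :
  (forall i, emb S (f1 i) = emb S (f2 i)) -> f1 = f2.
Proof. by move=> H; apply/ffunP => i; apply: emb_inj. Qed.

Lemma incl_comp n q p r (S : Sb n q) (S' : Sb n p.+1) (S'' : Sb n r.+1) :
  val S \subset val S' -> val S' \subset val S'' ->
  [ffun i => incl S' S'' (incl S S' i)] = incl S S''.
Proof.
move=> s1 s2; apply: (ffun_emb_inj (S := S'')) => i.
rewrite ffunE incl_emb // incl_emb // incl_emb //.
exact: subset_trans s2.
Qed.

Definition rk n (A : {set 'I_n}) (u : 'I_n) : nat := (\sum_(x in A) (x < u)%N)%N.
Definition sgn n (A : {set 'I_n}) (u : 'I_n) : k := (-1) ^+ rk A u.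

Lemma rkD1 n (A : {set 'I_n}) u v : u \in A -> rk A v = ((u < v)%N + rk (A :\ u) v)%N.
Proof. by move=> uA; rewrite /rk (big_setD1 u uA). Qed.

Definition ones m : {ffun 'I_m -> G} := [ffun=> 1%g].

Lemma comp_ones n q p r (S : Sb n q) (S' : Sb n p.+1) (S'' : Sb n r.+1) :
  val S \subset val S' -> val S' \subset val S'' ->
  FIG_comp (incl S' S'') (ones p.+1) (incl S S') (ones q) = (incl S S'', ones q).
Proof.
move=> s1 s2; rewrite /FIG_comp incl_comp //; congr pair.
by apply/ffunP => i; rewrite !ffunE mulg1.
Qed.

Definition K M n q := {ffun Sb n q -> M q}.

Definition face M n q (c : K M n q) (S' : Sb n q.+1) (u : 'I_n) : M q.+1 :=
  if (insub (val S' :\ u) : option (Sb n q)) is Some T then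
    FIGact M (incl T S') (ones q) (c T) else 0.

Definition delta M n q (c : K M n q) : K M n q.+1 :=
  [ffun S' : Sb n q.+1 => \sum_(u in val S') sgn (val S') u *: face c S' u].

Lemma face_eq M n q (c : K M n q) (S' : Sb n q.+1) u (S : Sb n q) :
  val S = val S' :\ u -> face c S' u = FIGact M (incl S S') (ones q) (c S).
Proof.
move=> HS; rewrite /face; case: (insubP (Sb n q) (val S' :\ u)) => [S0 _ H0|].
  by have -> : S0 = S by apply: val_inj; rewrite H0 HS.
by rewrite -HS (valP S).
Qed.

Lemma face_gen M n q (c : K M n q) (S' : Sb n q.+1) u (P : M q.+1 -> Prop) :
  P 0 -> (forall S : Sb n q, val S = val S' :\ u ->
     P (FIGact M (incl S S') (ones q) (c S))) -> P (face c S' u).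
Proof.
move=> P0 H; rewrite /face; case: (insubP (Sb n q) (val S' :\ u)) => [S0 _ H0|] //.
exact: H.
Qed.

Lemma subD1 n (A : {set 'I_n}) u : A :\ u \subset A.
Proof. exact: subD1set. Qed.

Lemma face_add M n q (c1 c2 : K M n q) S' u :
  face (c1 + c2) S' u = face c1 S' u + face c2 S' u.
Proof.
rewrite /face; case: (insubP (Sb n q) (val S' :\ u)) => [S0 _ H0|]; last by rewrite addr0.
by rewrite ffunE FIGact_add //; apply: incl_inj; rewrite H0 subD1.
Qed.

Lemma face_scale M n q (a : k) (c : K M n q) S' u :
  face (a *: c) S' u = a *: face c S' u.
Proof.
rewrite /face; case: (insubP (Sb n q) (val S' :\ u)) => [S0 _ H0|]; last by rewrite scaler0.
by rewrite ffunE FIGact_scale //; apply: incl_inj; rewrite H0 subD1.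
Qed.

Lemma delta_add M n q (c1 c2 : K M n q) : delta (c1 + c2) = delta c1 + delta c2.
Proof.
apply/ffunP => S'; rewrite !ffunE -big_split; apply: eq_bigr => u _.
by rewrite face_add scalerDr.
Qed.

Lemma delta_scale M n q a (c : K M n q) : delta (a *: c) = a *: delta c.
Proof.
apply/ffunP => S'; rewrite !ffunE scaler_sumr; apply: eq_bigr => u _.
by rewrite face_scale !scalerA mulrC.
Qed.

Lemma delta0 M n q : delta (0 : K M n q) = 0.
Proof. by rewrite -(scale0r (0 : K M n q)) delta_scale scale0r. Qed.

Lemma deltaB M n q (c1 c2 : K M n q) : delta (c1 - c2) = delta c1 - delta c2.
Proof. by rewrite delta_add -scaleN1r delta_scale scaleN1r. Qed.

Definition homK M W (h : FIGhom M W) n q (c : K M n q) : K W n q := [ffun S => h q (c S)].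

Lemma homK_add M W (h : FIGhom M W) n q (c1 c2 : K M n q) : homK h (c1 + c2) = homK h c1 + homK h c2.
Proof. by apply/ffunP => S; rewrite !ffunE FIGfun_add. Qed.

Lemma homKB M W (h : FIGhom M W) n q (c1 c2 : K M n q) : homK h (c1 - c2) = homK h c1 - homK h c2.
Proof. by apply/ffunP => S; rewrite !ffunE homB. Qed.

Lemma homK0 M W (h : FIGhom M W) n q : homK h (0 : K M n q) = 0.
Proof. by apply/ffunP => S; rewrite !ffunE hom0. Qed.

Lemma delta_nat M W (h : FIGhom M W) n q (c : K M n q) :
  homK h (delta c) = delta (homK h c).
Proof.
apply/ffunP => S'; rewrite !ffunE hom_sum; apply: eq_bigr => u _.
rewrite FIGfun_scale /face; case: (insubP (Sb n q) (val S' :\ u)) => [S0 _ H0|]; last by rewrite hom0.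
by rewrite ffunE FIGfun_nat //; apply: incl_inj; rewrite H0 subD1.
Qed.

End Koszul.
Section DD.
Variables (k : comPzRingType) (G : groupType).
Implicit Types (M : FIGmod k G).

Lemma pair_cancel n (V : zmodType) (R : {set 'I_n}) (A : 'I_n -> 'I_n -> V) :
  (forall u v, u \in R -> v \in R -> u != v -> A u v = - A v u) ->
  \sum_(u in R) \sum_(v in R :\ u) A u v = 0.
Proof.
move=> H.
have -> : \sum_(u in R) \sum_(v in R :\ u) A u v =
   \sum_u \sum_v (if [&& u \in R, v \in R & (v < u)%N] then A u v else 0) +
   \sum_u \sum_v (if [&& u \in R, v \in R & (u < v)%N] then A u v else 0).
  rewrite -big_split big_mkcond /=; apply: eq_bigr => u _.
  rewrite -big_split /=.
  case: (boolP (u \in R)) => uR /=; last by rewrite big1 // => v _; rewrite addr0.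
  rewrite big_mkcond /=; apply: eq_bigr => v _; rewrite !inE.
  case: (v \in R); rewrite ?andbF ?andbT /= ?addr0 //.
  case: (ltngtP v u) => [vu|uv|E]; rewrite /= ?addr0 ?add0r //.
  - by rewrite ifT // -(inj_eq val_inj) /= (ltn_eqF vu).
  - by rewrite ifT // -(inj_eq val_inj) /= (gtn_eqF uv).
  - have -> : v = u by apply: val_inj.
    by rewrite eqxx.
rewrite [X in _ + X]exchange_big /= -big_split big1 // => u _.
rewrite -big_split big1 // => v _ /=.
case: (boolP (u \in R)) => uR; case: (boolP (v \in R)) => vR /=; rewrite ?addr0 //.
case: (ltnP v u) => vu; rewrite ?addr0 //.
by rewrite H ?addNr // -(inj_eq val_inj) /= (gtn_eqF vu).
Qed.

Lemma sgn_anti n (R : {set 'I_n}) u v : u \in R -> v \in R -> u != v ->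
  sgn k R u * sgn k (R :\ u) v = - (sgn k R v * sgn k (R :\ v) u).
Proof.
move=> uR vR uv; rewrite /sgn [rk R u](rkD1 _ vR) [rk R v](rkD1 _ uR).
case: (ltngtP u v) => [lt|lt|E]; last by move: uv; rewrite (val_inj E) eqxx.
- by rewrite /= add0n add1n exprS mulN1r mulNr opprK mulrC.
- by rewrite /= add0n add1n exprS mulN1r mulNr mulrC.
Qed.

Lemma cardD1_Sb n q (R : Sb n q.+1) u : u \in val R -> #|val R :\ u| == q.
Proof.
move=> uR; move: (cardsD1 u (val R)); rewrite uR (eqP (valP R)) add1n => -[E].
by rewrite -E.
Qed.

Definition sbD1 n q (R : Sb n q.+1) u (H : u \in val R) : Sb n q :=
  Sub (val R :\ u) (cardD1_Sb H).

Lemma sbD1E n q (R : Sb n q.+1) u (H : u \in val R) : val (sbD1 H) = val R :\ u.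
Proof. by rewrite /sbD1 SubK. Qed.

Lemma delta_delta M n q (c : K M n q) : delta (delta c) = 0.
Proof.
apply/ffunP => R; rewrite ffunE [RHS]ffunE.
pose Z (A : {set 'I_n}) : M q.+2 :=
  if (insub A : option (Sb n q)) is Some T then FIGact M (incl T R) (ones G q) (c T) else 0.
have ZE : forall T : Sb n q, Z (val T) = FIGact M (incl T R) (ones G q) (c T).
  by move=> T; rewrite /Z valK.
have step : forall u, u \in val R -> face (delta c) R u =
    \sum_(v in val R :\ u) sgn k (val R :\ u) v *: Z (val R :\ u :\ v).
  move=> u uR.
  rewrite (face_eq _ (S := sbD1 uR)) ?sbD1E // ffunE act_sum; last first.
    by apply: incl_inj; rewrite sbD1E subD1.
  rewrite sbD1E; apply: eq_bigr => v vRu.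
  rewrite FIGact_scale; last by apply: incl_inj; rewrite sbD1E subD1.
  congr (_ *: _).
  have vRu' : v \in val (sbD1 uR) by rewrite sbD1E.
  rewrite (face_eq _ (S := sbD1 vRu')) ?sbD1E // FIGact_comp; first last.
  - by apply: incl_inj; rewrite !sbD1E subD1.
  - by apply: incl_inj; rewrite sbD1E subD1.
  rewrite comp_ones; first last.
  - by rewrite sbD1E subD1.
  - by rewrite !sbD1E subD1.
  by rewrite -ZE !sbD1E.
rewrite (eq_bigr (fun u => \sum_(v in val R :\ u)
     (sgn k (val R) u * sgn k (val R :\ u) v) *: Z (val R :\ u :\ v))); last first.
  by move=> u uR; rewrite step // scaler_sumr; apply: eq_bigr => v _; rewrite scalerA.
apply: pair_cancel => u v uR vR uv.
rewrite sgn_anti // scaleNr.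
have -> : val R :\ u :\ v = val R :\ v :\ u.
  by apply/setP => x; rewrite !inE andbCA.
done.
Qed.

End DD.
Section Top.
Variables (k : comPzRingType) (G : groupType).
Implicit Types (M : FIGmod k G).

Lemma delta_lower M N (w : K M N.+1 N) (S : Sb N.+1 N.+1) : FIGlower (delta w S).
Proof.
rewrite ffunE; apply: lower_sum => u _; apply: FIGlower_scale.
apply: (face_gen (P := @FIGlower _ _ M N.+1)); first exact: FIGlower_0.
move=> T HT; apply: FIGlower_img => //; by apply: incl_inj; rewrite HT subD1.
Qed.

Lemma full_set n (R : Sb n n) : val R = setT.
Proof.
apply/eqP; rewrite eqEcard subsetT cardsT card_ord.
by rewrite /= (eqP (valP R)) leqnn.
Qed.

Lemma emb_full n (R : Sb n n) (i : 'I_n) : emb R i = i.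
Proof.
apply: val_inj; rewrite (emb_val _ _ i) full_set enum_setT -enumT /=.
by rewrite nth_enum_ord.
Qed.

Lemma lower_delta M N (y : M N.+1) : FIGlower y -> exists w : K M N.+1 N, delta w = [ffun _ => y].
Proof.
elim=> {y}.
- move=> m f g x mn fi.
  have [j Hj] : exists j : 'I_N.+1, j \notin codom f.
    case: (pickP (fun j => j \notin codom f)) => [j Hj|H]; first by exists j.
    exfalso; have : (N.+1 <= m)%N.
      rewrite -{1}(card_ord N.+1) -(card_ord m) -(size_codom f).
      apply: leq_trans (card_size _).
      apply: subset_leq_card; apply/subsetP => z _.
      by move: (H z); rewrite /= => /negbFE.
    by rewrite leqNgt mn.
  have cS : #|[set: 'I_N.+1] :\ j| == N.
    by move: (cardsD1 j [set: 'I_N.+1]); rewrite in_setT cardsT card_ord add1n => -[<-].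
  pose S0 : Sb N.+1 N := Sub ([set: 'I_N.+1] :\ j) cS.
  have Hf : forall i, f i \in val S0.
    move=> i; rewrite SubK !inE andbT; apply: contraNneq Hj => <-.
    exact: codom_f.
  pose f' := [ffun i => rank_of (Hf i)].
  exists [ffun T => if T == S0 then sgn k setT j *: FIGact M f' g x else 0].
  apply/ffunP => R; rewrite !ffunE.
  have jR : j \in val R by rewrite full_set in_setT.
  rewrite (bigD1 j jR) /= big1 ?addr0; last first.
    move=> u /andP [uR uj].
    apply: (face_gen (P := fun z => _ *: z = 0)); first by rewrite scaler0.
    move=> T HT; rewrite ffunE ifF; first by rewrite act0 ?scaler0 //; apply: incl_inj; rewrite HT subD1.
    apply/negbTE; apply: contraNneq uj => E.
    have : val T = val S0 by rewrite E.
    rewrite HT SubK full_set => /setP /(_ j); rewrite !inE eqxx /= andbT.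
    by move/negbT; rewrite negbK eq_sym.
  have HS0 : val S0 = val R :\ j by rewrite SubK full_set.
  rewrite (face_eq _ HS0) ffunE eqxx FIGact_scale; last first.
    by apply: incl_inj; rewrite HS0 subD1.
  rewrite full_set signrZK FIGact_comp //; last first.
    - move=> a b; rewrite !ffunE => E; apply: fi.
      by rewrite -(emb_rank (Hf a)) -(emb_rank (Hf b)) E.
    - by apply: incl_inj; rewrite HS0 subD1.
  rewrite /FIG_comp /=.
  have -> : [ffun i => incl S0 R (f' i)] = f.
    apply/ffunP => i; apply: (emb_inj (S := R)); rewrite ffunE incl_emb; last first.
      by rewrite HS0 subD1.
    by rewrite emb_full ffunE emb_rank.
  have -> : [ffun i => (g i * ones G N (f' i))%g] = g.
    by apply/ffunP => i; rewrite !ffunE mulg1.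
  done.
- by exists 0; rewrite delta0; apply/ffunP => R; rewrite !ffunE.
- move=> x y _ [w1 E1] _ [w2 E2]; exists (w1 + w2); rewrite delta_add E1 E2.
  by apply/ffunP => R; rewrite !ffunE.
- move=> a x _ [w E]; exists (a *: w); rewrite delta_scale E.
  by apply/ffunP => R; rewrite !ffunE.
Qed.

End Top.
Section Emod.
Variables (k : comPzRingType) (G : groupType).
Variables (P : FIGmod k G) (m : nat).

Lemma sum_collapse (I J : finType) (V : zmodType) (Q : I -> J) (Pj : pred J) (X : I -> V) :
  \sum_(j | Pj j) \sum_(i | Q i == j) X i = \sum_(i | Pj (Q i)) X i.
Proof.
rewrite (partition_big Q Pj) //; apply: eq_bigr => j Pjj.
by apply: eq_bigl => i; case: eqP => [->|]; rewrite ?Pjj ?andbF.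
Qed.

Definition fcomp r r' (h : {ffun 'I_r -> 'I_r'}) (f : {ffun 'I_m -> 'I_r}) : {ffun 'I_m -> 'I_r'} :=
  [ffun i => h (f i)].
Definition lab r (g : {ffun 'I_r -> G}) (f : {ffun 'I_m -> 'I_r}) : {ffun 'I_m -> G} :=
  [ffun i => g (f i)].
Definition idm : {ffun 'I_m -> 'I_m} := [ffun i => i].

Lemma idm_inj : injective idm.
Proof. by move=> a b; rewrite !ffunE. Qed.

Definition Esp (r : nat) : lmodType k := {ffun {ffun 'I_m -> 'I_r} -> P m}.

Definition Eact r r' (h : {ffun 'I_r -> 'I_r'}) (g : {ffun 'I_r -> G}) (c : Esp r) : Esp r' :=
  [ffun f' => \sum_(f | fcomp h f == f') FIGact P idm (lab g f) (c f)].

Lemma Eact_add r r' (h : {ffun 'I_r -> 'I_r'}) g (x y : Esp r) : injective h ->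
  Eact h g (x + y) = Eact h g x + Eact h g y.
Proof.
move=> _; apply/ffunP => f'; rewrite !ffunE -big_split; apply: eq_bigr => f _.
by rewrite ffunE FIGact_add //; apply: idm_inj.
Qed.

Lemma Eact_scale r r' (h : {ffun 'I_r -> 'I_r'}) g a (x : Esp r) : injective h ->
  Eact h g (a *: x) = a *: Eact h g x.
Proof.
move=> _; apply/ffunP => f'; rewrite !ffunE scaler_sumr; apply: eq_bigr => f _.
by rewrite ffunE FIGact_scale //; apply: idm_inj.
Qed.

Lemma lab_ones r f : lab (ones G r) f = ones G m.
Proof. by apply/ffunP => i; rewrite !ffunE. Qed.

Lemma act_idm_ones (x : P m) : FIGact P idm (ones G m) x = x.
Proof. exact: FIGact_id. Qed.

Lemma Eact_id r (x : Esp r) : Eact [ffun i => i] [ffun=> 1%g] x = x.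
Proof.
apply/ffunP => f'; rewrite ffunE (big_pred1 f'); last first.
  by move=> f; rewrite /fcomp; congr (_ == _); apply/ffunP => i; rewrite !ffunE.
have -> : lab [ffun=> 1%g] f' = ones G m by apply/ffunP => i; rewrite !ffunE.
exact: act_idm_ones.
Qed.

Lemma act_idm_comp (a b : {ffun 'I_m -> G}) (x : P m) :
  FIGact P idm a (FIGact P idm b x) = FIGact P idm [ffun i => (b i * a i)%g] x.
Proof.
rewrite FIGact_comp; try exact: idm_inj.
rewrite /FIG_comp /=; congr FIGact; apply/ffunP => i; rewrite !ffunE //.
Qed.

Lemma Eact_comp r r' r'' (h2 : {ffun 'I_r' -> 'I_r''}) g2 (h1 : {ffun 'I_r -> 'I_r'}) g1
  (x : Esp r) : injective h2 -> injective h1 ->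
  Eact h2 g2 (Eact h1 g1 x) = Eact (FIG_comp h2 g2 h1 g1).1 (FIG_comp h2 g2 h1 g1).2 x.
Proof.
move=> _ _; apply/ffunP => f''; rewrite !ffunE.
rewrite (eq_bigr (fun f' => \sum_(f | fcomp h1 f == f')
   FIGact P idm (lab g2 (fcomp h1 f)) (FIGact P idm (lab g1 f) (x f)))); last first.
  move=> f' _; rewrite ffunE act_sum; last exact: idm_inj.
  by apply: eq_bigr => f /eqP ->.
rewrite (sum_collapse (fun f => fcomp h1 f) (fun f' => fcomp h2 f' == f'')
    (fun f => FIGact P idm (lab g2 (fcomp h1 f)) (FIGact P idm (lab g1 f) (x f)))).
apply: eq_big => [f|f _].
  by congr (_ == _); apply/ffunP => i; rewrite !ffunE.
rewrite act_idm_comp; congr FIGact; apply/ffunP => i; rewrite !ffunE //.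
Qed.

Definition Emod : FIGmod k G :=
  @FIGModule k G Esp (@Eact) (@Eact_add) (@Eact_scale) (@Eact_id) (@Eact_comp).

Definition aE_fun r (c : Emod r) : P r :=
  \sum_(f : {ffun 'I_m -> 'I_r} | injectiveb f) FIGact P f (ones G m) (c f).

Lemma aE_nat r r' (h : {ffun 'I_r -> 'I_r'}) g (c : Emod r) : injective h ->
  aE_fun (FIGact Emod h g c) = FIGact P h g (aE_fun c).
Proof.
move=> hi; rewrite /aE_fun act_sum //=.
rewrite (eq_bigr (fun f' => \sum_(f | fcomp h f == f')
   FIGact P (fcomp h f) (ones G m) (FIGact P idm (lab g f) (c f)))); last first.
  move=> f' /injectiveP fi'; rewrite ffunE act_sum //.
  by apply: eq_bigr => f /eqP ->.
rewrite (sum_collapse (fun f => fcomp h f) (fun f' => injectiveb f')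
    (fun f => FIGact P (fcomp h f) (ones G m) (FIGact P idm (lab g f) (c f)))).
apply: eq_big => [f|f /injectiveP fhi].
  apply/idP/idP => /injectiveP fi; apply/injectiveP => a b.
  - by move=> E; apply: fi; rewrite /fcomp !ffunE E.
  - by rewrite /fcomp !ffunE => /hi /fi.
have fi : injective f by move=> a b E; apply: fhi; rewrite /fcomp !ffunE E.
rewrite FIGact_comp //; last exact: idm_inj.
rewrite FIGact_comp //; congr FIGact; apply/ffunP => i; rewrite !ffunE ?mulg1 ?mul1g //.
Qed.

Definition aE : FIGhom Emod P.
Proof.
apply: (@FIGHom k G Emod P aE_fun).
- move=> r x y; rewrite /aE_fun -big_split; apply: eq_bigr => f /injectiveP fi.
  by rewrite ffunE FIGact_add.
- move=> r a x; rewrite /aE_fun scaler_sumr; apply: eq_bigr => f /injectiveP fi.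
  by rewrite ffunE FIGact_scale.
- by move=> r r' h g x hi; rewrite aE_nat.
Defined.

Lemma aE_surj (y : P m) : exists c : Emod m, aE m c = y.
Proof.
exists [ffun f => if f == idm then y else 0].
rewrite /= /aE_fun (bigD1 idm) /=; last by apply/injectiveP; apply: idm_inj.
rewrite ffunE eqxx act_idm_ones big1 ?addr0 // => f /andP [/injectiveP fi fn].
by rewrite ffunE (negbTE fn) act0.
Qed.

End Emod.
Section Homotopy.
Variables (k : comPzRingType).

Definition Dop n (V : lmodType k) (F : {set 'I_n} -> V) (A : {set 'I_n}) : V :=
  \sum_(u in A) sgn k A u *: F (A :\ u).
Definition Hop n (V : lmodType k) (j : 'I_n) (F : {set 'I_n} -> V) (A : {set 'I_n}) : V :=
  if j \notin A then sgn k (j |: A) j *: F (j |: A) else 0.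

Lemma rkU1 n (A : {set 'I_n}) j v : j \notin A -> rk (j |: A) v = ((j < v)%N + rk A v)%N.
Proof. by move=> jA; rewrite (rkD1 _ (setU11 j A)) setU1K. Qed.

Lemma sgn_sq (a b : nat) : ((-1) ^+ a * (-1) ^+ b = (-1) ^+ (a + b) :> k)%R.
Proof. by rewrite exprD. Qed.

Lemma homotopy n (V : lmodType k) (j : 'I_n) F A :
  Dop (Hop j F) A + Hop j (Dop F) A = F A :> V.
Proof.
rewrite /Dop /Hop; case: (boolP (j \in A)) => jA /=.
- rewrite addr0 (bigD1 j jA) /= big1 ?addr0.
    by rewrite setD11 /= setD1K // signrZK.
  move=> u /andP [uA uj]; rewrite ifF ?scaler0 //.
  by apply/negbTE; rewrite negbK !inE eq_sym uj jA.
rewrite (big_setU1 _ jA) /= setU1K // scalerDr signrZK addrCA.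
rewrite scaler_sumr -big_split big1 ?addr0 //= => u uA.
have uj : u != j by apply: contraNneq jA => <-.
have jAu : j \notin A :\ u by rewrite !inE negb_and jA orbT.
rewrite jAu.
have -> : (j |: A) :\ u = j |: (A :\ u).
  by apply/setP => x; rewrite !inE; case: (eqVneq x j) => [->|] //=; rewrite eq_sym uj.
rewrite !scalerA -scalerDl.
suff -> : (sgn k A u * sgn k (j |: A :\ u) j + sgn k (j |: A) j * sgn k (j |: A) u = 0)%R.
  by rewrite scale0r.
rewrite /sgn (rkU1 _ jAu) ltnn add0n (rkU1 _ jA) (rkU1 _ jA) ltnn add0n.
rewrite [rk A j](rkD1 _ uA) !sgn_sq.
case: (ltngtP u j) => [lt|lt|E]; last by move: uj; rewrite (val_inj E) eqxx.
- have -> : (true + rk (A :\ u) j + (false + rk A u) = (rk A u + rk (A :\ u) j).+1)%N.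
    by rewrite /=; lia.
  by rewrite exprS mulN1r addrN.
- have -> : (false + rk (A :\ u) j + (true + rk A u) = (rk A u + rk (A :\ u) j).+1)%N.
    by rewrite /=; lia.
  by rewrite exprS mulN1r addrN.
Qed.

End Homotopy.
Section Eexact.
Variables (k : comPzRingType) (G : groupType).
Variables (P : FIGmod k G) (m : nat).

Local Notation EM := (Emod P m).

Definition hat n q (c : K EM n q) (S : Sb n q) (phi : {ffun 'I_m -> 'I_n}) : P m :=
  \sum_(f : {ffun 'I_m -> 'I_q} | [ffun i => emb S (f i)] == phi) c S f.

Definition hatF n q (c : K EM n q) phi (A : {set 'I_n}) : P m :=
  if (insub A : option (Sb n q)) is Some T then hat c T phi else 0.

Lemma hatF_val n q (c : K EM n q) phi (S : Sb n q) : hatF c phi (val S) = hat c S phi.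
Proof. by rewrite /hatF valK. Qed.

Lemma hat_delta n q (c : K EM n q) (S' : Sb n q.+1) phi :
  hat (delta c) S' phi = Dop (hatF c phi) (val S').
Proof.
rewrite /hat /Dop.
rewrite (eq_bigr (fun f' => \sum_(u in val S') sgn k (val S') u *: face c S' u f')); last first.
  by move=> f' _; rewrite ffunE sum_ffunE; apply: eq_bigr => u _; rewrite ffunE.
rewrite exchange_big /=; apply: eq_bigr => u uS.
rewrite -scaler_sumr; congr (_ *: _).
rewrite /face /hatF; case: (insubP (Sb n q) (val S' :\ u)) => [T _ HT|_]; last first.
  by rewrite big1 // => f' _; rewrite ffunE.
have sub : val T \subset val S' by rewrite HT subD1.
rewrite /hat.
rewrite (eq_bigr (fun f' => \sum_(f | fcomp (incl T S') f == f') c T f)); last first.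
  move=> f' _; rewrite /= ffunE; apply: eq_bigr => f _.
  by rewrite lab_ones act_idm_ones.
rewrite (sum_collapse (fun f => fcomp (incl T S') f)
  (fun f' => [ffun i => emb S' (f' i)] == phi) (fun f => c T f)).
apply: eq_bigl => f; congr (_ == _); apply/ffunP => i.
by move: (incl_emb (f i) sub); rewrite !ffunE.
Qed.

Lemma c_hat n q (c : K EM n q) S f : c S f = hat c S [ffun i => emb S (f i)].
Proof.
rewrite /hat (big_pred1 f) // => f1; apply/eqP/eqP => [E|->] //.
by apply: (ffun_emb_inj (S := S)) => i; move/ffunP: E => /(_ i); rewrite !ffunE.
Qed.

Lemma hat_supp n q (c : K EM n q) (S : Sb n q) (phi : {ffun 'I_m -> 'I_n}) i : phi i \notin val S -> hat c S phi = 0.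
Proof.
move=> pi; rewrite /hat big_pred0 // => f; apply/negbTE; apply: contraNneq pi => <-.
by rewrite ffunE embP.
Qed.

Lemma hat0 n q (S : Sb n q) phi : hat (0 : K EM n q) S phi = 0.
Proof. by rewrite /hat big1 // => f _; rewrite !ffunE. Qed.

Lemma E_exact n q (c : K EM n q.+1) : (q.+1 < n)%N -> delta c = 0 ->
  exists e : K EM n q, delta e = c.
Proof.
move=> qn dc.
pose jf (phi : {ffun 'I_m -> 'I_n}) := [pick j | j \notin codom phi].
pose e : K EM n q := [ffun T : Sb n q => [ffun f1 : {ffun 'I_m -> 'I_q} =>
   if jf [ffun i => emb T (f1 i)] is Some j then
     Hop j (hatF c [ffun i => emb T (f1 i)]) (val T) else 0]].
exists e.
suff H : forall (S : Sb n q.+1) phi, hat (delta e) S phi = hat c S phi.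
  by apply/ffunP => S; apply/ffunP => f; rewrite c_hat H -c_hat.
move=> S phi; rewrite hat_delta.
case Ej: (jf phi) => [j|].
- have Hj : j \notin codom phi by move: Ej; rewrite /jf; case: pickP => // x Hx [<-].
  have key : forall B : {set 'I_n}, #|B| == q -> hatF e phi B = Hop j (hatF c phi) B.
    move=> B cB; rewrite /hatF (insubT (fun A : {set 'I_n} => #|A| == q) cB) /hat.
    case: (boolP [forall i, phi i \in B]) => [/forallP sub|].
    + have Hi : forall i, phi i \in val (Sub B cB : Sb n q) by move=> i; rewrite SubK.
      pose f1 := [ffun i => rank_of (Hi i)].
      have Ef1 : [ffun i => emb (Sub B cB : Sb n q) (f1 i)] = phi.
        by apply/ffunP => i; rewrite !ffunE emb_rank.
      rewrite (big_pred1 f1); last first.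
        move=> f; apply/eqP/eqP => [E|->] //.
        apply: (ffun_emb_inj (S := (Sub B cB : Sb n q))) => i; move/ffunP: E => /(_ i).
        by rewrite -Ef1 !ffunE.
      by rewrite !ffunE Ef1 Ej SubK.
    + move/forallPn => [i pi].
      rewrite big_pred0; last first.
        move=> f; apply/negbTE; apply: contraNneq pi => <-.
        by rewrite ffunE; move: (embP (Sub B cB : Sb n q) (f i)); rewrite SubK.
      rewrite /Hop; case: ifP => // jB.
      rewrite /hatF; case: (insubP (Sb n q.+1) (j |: B)) => [S2 _ HS2|_]; last by rewrite scaler0.
      rewrite -/(hat c S2 phi) (@hat_supp _ _ c S2 phi i) ?scaler0 // HS2 !inE negb_or pi andbT.
      by apply: contraNneq Hj => <-; apply: codom_f.
  rewrite /Dop (eq_bigr (fun u => sgn k (val S) u *: Hop j (hatF c phi) (val S :\ u))); last first.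
    by move=> u uS; rewrite key // cardD1_Sb.
  rewrite -/(Dop _ _) -[hat c S phi]hatF_val -(homotopy j (hatF c phi) (val S)).
  suff -> : Hop j (Dop (hatF c phi)) (val S) = 0 by rewrite addr0.
  rewrite /Hop; case: ifP => // jS.
  have cS2 : #|j |: val S| == q.+2 by rewrite cardsU1 jS (eqP (valP S)).
  have := hat_delta c (Sub (j |: val S) cS2 : Sb n q.+2) phi; rewrite SubK => <-.
  by rewrite dc hat0 scaler0.
- have Hall : forall x, x \in codom phi.
    move=> x; move: Ej; rewrite /jf; case: pickP => // H _.
    by move: (H x) => /negbFE.
  have [x xS] : exists x, x \notin val S.
    have : (0 < #|~: val S|)%N.
      have := cardsC (val S); rewrite card_ord (eqP (valP S)); lia.
    by move/card_gt0P => [x]; rewrite inE => xS; exists x.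
  have [i xi] := codomP (Hall x).
  rewrite (@hat_supp _ _ c S phi i); last by rewrite -xi.
  rewrite /Dop big1 // => u _.
  rewrite /hatF; case: (insubP (Sb n q) (val S :\ u)) => [T _ _|_]; last by rewrite scaler0.
  rewrite /hat big1 ?scaler0 // => f /eqP Ef.
  by rewrite !ffunE Ef Ej.
Qed.

End Eexact.
Section Proj.
Variables (k : comPzRingType) (G : groupType).
Implicit Types (M : FIGmod k G).

Definition hsnd (V W : FIGmod k G) : FIGhom (@dsum k G V W) W.
Proof. by apply: (@FIGHom k G (dsum V W) W (fun n x => x.2)). Defined.

Definition hinr (V W : FIGmod k G) : FIGhom W (@dsum k G V W).
Proof.
apply: (@FIGHom k G W (dsum V W) (fun n x => (0, x))).
- by move=> n x y /=; congr pair; rewrite addr0.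
- by move=> n a x /=; congr pair; rewrite scaler0.
- by move=> n m f g x fi /=; rewrite /dsum_act /= act0.
Defined.

Lemma hcopair_pair (U V W : FIGmod k G) (h1 : FIGhom V U) (h2 : FIGhom W U) n a b :
  hcopair h1 h2 n (a, b) = h1 n a + h2 n b.
Proof. by []. Qed.

Definition Kexact M n q := forall c : K M n q.+1, delta c = 0 -> exists e : K M n q, delta e = c.

Lemma dsum_exact (V W : FIGmod k G) n q : Kexact V n q -> Kexact W n q -> Kexact (dsum V W) n q.
Proof.
move=> HV HW c dc.
have [e1 E1] := HV (homK (hfst V W) c) ltac:(by rewrite -delta_nat dc homK0).
have [e2 E2] := HW (homK (hsnd V W) c) ltac:(by rewrite -delta_nat dc homK0).
exists (homK (hinl V W) e1 + homK (hinr V W) e2).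
rewrite delta_add -!delta_nat E1 E2.
by apply/ffunP => S; rewrite !ffunE /=; case: (c S) => a b /=; congr pair; rewrite ?addr0 ?add0r.
Qed.

Variable (P : FIGmod k G).

Fixpoint Esum (N : nat) : FIGmod k G :=
  match N with 0 => Emod P 0 | N'.+1 => dsum (Esum N') (Emod P N'.+1) end.

Fixpoint aSum (N : nat) : FIGhom (Esum N) P :=
  match N return FIGhom (Esum N) P with
  | 0 => aE P 0
  | N'.+1 => hcopair (aSum N') (aE P N'.+1) end.

Lemma aSum_surj N r (y : P r) : (r <= N)%N -> exists e, aSum N r e = y.
Proof.
elim: N => [|N IH] rN.
  move: y; have -> : r = 0%N by apply/eqP; rewrite -leqn0.
  by move=> y; apply: aE_surj.
case: (leqP r N) => rN'.
  have [e He] := IH rN'; exists (e, 0); by rewrite hcopair_pair He hom0 addr0.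
clear IH; have Er : r = N.+1 by apply/eqP; rewrite eqn_leq rN rN'.
move: y; rewrite Er => y.
have [c Hc] := aE_surj y; exists (0, c); by rewrite hcopair_pair hom0 add0r Hc.
Qed.

Lemma Esum_exact N n q : (q.+1 < n)%N -> Kexact (Esum N) n q.
Proof.
move=> qn; elim: N => [|N IH]; first by move=> c dc; apply: E_exact.
apply: dsum_exact => //; move=> c dc; exact: E_exact.
Qed.

(* the part of P in degrees > N *)
Variable N : nat.

Definition Xsp (r : nat) : lmodType k := {ffun 'I_(r - N) -> P r}.

Definition Xact r r' (h : {ffun 'I_r -> 'I_r'}) (g : {ffun 'I_r -> G}) (x : Xsp r) : Xsp r' :=
  [ffun t' : 'I_(r' - N) => \sum_(t : 'I_(r - N) | val t == val t') FIGact P h g (x t)].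

Lemma Xact_add r r' (h : {ffun 'I_r -> 'I_r'}) g (x y : Xsp r) : injective h ->
  Xact h g (x + y) = Xact h g x + Xact h g y.
Proof.
move=> hi; apply/ffunP => t'; rewrite !ffunE -big_split; apply: eq_bigr => t _.
by rewrite ffunE FIGact_add.
Qed.

Lemma Xact_scale r r' (h : {ffun 'I_r -> 'I_r'}) g a (x : Xsp r) : injective h ->
  Xact h g (a *: x) = a *: Xact h g x.
Proof.
move=> hi; apply/ffunP => t'; rewrite !ffunE scaler_sumr; apply: eq_bigr => t _.
by rewrite ffunE FIGact_scale.
Qed.

Lemma Xact_id r (x : Xsp r) : Xact [ffun i => i] [ffun=> 1%g] x = x.
Proof.
by apply/ffunP => t'; rewrite ffunE (big_pred1 t') ?FIGact_id.
Qed.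

Lemma inj_leq a b (h : {ffun 'I_a -> 'I_b}) : injective h -> (a <= b)%N.
Proof. by move=> hi; have := leq_card h hi; rewrite !card_ord. Qed.

Lemma Xcollapse a b c (V : zmodType) (F : 'I_a -> V) (t'' : 'I_c) : (a <= b)%N ->
  \sum_(t' : 'I_b | val t' == val t'') \sum_(t : 'I_a | val t == val t') F t =
  \sum_(t : 'I_a | val t == val t'') F t.
Proof.
move=> ab.
rewrite (eq_bigr (fun t' => \sum_(t : 'I_a | widen_ord ab t == t') F t)); last first.
  by move=> t' _; apply: eq_bigl => t; rewrite -val_eqE.
by rewrite (sum_collapse (widen_ord ab) (fun t' : 'I_b => val t' == val t'') F).
Qed.

Lemma subleq a b : (a <= b)%N -> (a - N <= b - N)%N.
Proof. by move=> ab; apply: leq_sub2r. Qed.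

Lemma Xact_comp r r' r'' (h2 : {ffun 'I_r' -> 'I_r''}) g2 (h1 : {ffun 'I_r -> 'I_r'}) g1
  (x : Xsp r) : injective h2 -> injective h1 ->
  Xact h2 g2 (Xact h1 g1 x) = Xact (FIG_comp h2 g2 h1 g1).1 (FIG_comp h2 g2 h1 g1).2 x.
Proof.
move=> h2i h1i; apply/ffunP => t''; rewrite !ffunE.
rewrite (eq_bigr (fun t' => \sum_(t : 'I_(r - N) | val t == val t')
    FIGact P h2 g2 (FIGact P h1 g1 (x t)))); last first.
  by move=> t' _; rewrite ffunE act_sum.
rewrite (Xcollapse (fun t => FIGact P h2 g2 (FIGact P h1 g1 (x t))) t'' (subleq (inj_leq h1i))).
by apply: eq_bigr => t _; rewrite FIGact_comp.
Qed.

Definition Xmod : FIGmod k G :=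
  @FIGModule k G Xsp (@Xact) (@Xact_add) (@Xact_scale) (@Xact_id) (@Xact_comp).

Definition aX_fun r (x : Xmod r) : P r := \sum_(t : 'I_(r - N) | val t == 0%N) x t.

Definition aX : FIGhom Xmod P.
Proof.
apply: (@FIGHom k G Xmod P aX_fun).
- by move=> r x y; rewrite /aX_fun -big_split; apply: eq_bigr => t _; rewrite ffunE.
- by move=> r a x; rewrite /aX_fun scaler_sumr; apply: eq_bigr => t _; rewrite ffunE.
- move=> r r' h g x hi; rewrite /aX_fun act_sum //=.
  rewrite (eq_bigr (fun t' => \sum_(t : 'I_(r - N) | val t == val t') FIGact P h g (x t))); last first.
    by move=> t' _; rewrite ffunE.
  pose z : 'I_1 := ord0.
  rewrite (eq_bigl (fun t' : 'I_(r' - N) => val t' == val z)) //.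
  rewrite (Xcollapse (fun t => FIGact P h g (x t)) z (subleq (inj_leq hi))).
  by apply: eq_bigl.
Defined.

Lemma aX_surj r (y : P r) : (N < r)%N -> exists x : Xmod r, aX r x = y.
Proof.
move=> Nr; exists [ffun=> y]; rewrite /= /aX_fun.
have t0 : (0 < r - N)%N by rewrite subn_gt0.
by rewrite (big_pred1 (Ordinal t0)) ?ffunE.
Qed.

Lemma X_exact n q : (q.+1 < n)%N -> N = n -> Kexact Xmod n q.
Proof.
move=> qn Nn c _; exists 0; rewrite delta0.
apply/ffunP => S; apply/ffunP => t; exfalso.
case: t => t; rewrite Nn; lia.
Qed.

End Proj.

Lemma proj_exact (k : comPzRingType) (G : groupType) (Q : FIGmod k G) n q :
  FIGprojective Q -> (q.+1 < n)%N -> Kexact Q n q.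
Proof.
move=> HQ qn c dc.
pose T := dsum (Esum Q n) (Xmod Q n).
pose a := hcopair (aSum Q n) (aX Q n).
have sur : FIGsurj a.
  move=> r y; case: (leqP r n) => rn.
    have [e He] := aSum_surj y rn; exists (e, 0); by rewrite hcopair_pair He hom0 addr0.
  have [x Hx] := aX_surj y rn; exists (0, x); by rewrite hcopair_pair hom0 add0r Hx.
have [c0 Hc0] := HQ T Q a (hid Q) sur.
have TE : Kexact T n q by apply: dsum_exact; [apply: Esum_exact | apply: X_exact].
have [eT HeT] := TE (homK c0 c) ltac:(by rewrite -delta_nat dc homK0).
exists (homK a eT); rewrite -delta_nat HeT.
by apply/ffunP => S; rewrite !ffunE Hc0.
Qed.
Section Chase.
Variables (k : comPzRingType) (G : groupType).
Variables (V : FIGmod k G) (R : FIGprojres V).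

Lemma lift_exact (U W Y : FIGmod k G) (a : FIGhom U W) (b : FIGhom W Y) :
  FIGexact a b -> forall n q (c : K W n q), homK b c = 0 -> exists c', homK a c' = c.
Proof.
move=> ex n q c bc.
have exP : forall S, exists y, a q y == c S.
  move=> S; move/ffunP: bc => /(_ S); rewrite !ffunE => /(proj1 (ex _ _)) [y Hy].
  by exists y; apply/eqP.
exists [ffun S => xchoose (exP S)]; apply/ffunP => S; rewrite !ffunE.
exact: (eqP (xchooseP (exP S))).
Qed.

Lemma ddK j n q (x : K (pr_obj R j.+2) n q) :
  homK (pr_d R j) (homK (pr_d R j.+1) x) = 0.
Proof.
apply/ffunP => S; rewrite !ffunE; apply: (proj2 (pr_exactS _)).
by exists (x S).
Qed.

Variables (n s : nat).
Hypothesis Vs0 : forall v : V s, v = 0.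

Definition cyc j : K (pr_obj R j) n (j + s) -> Prop :=
  match j return K (pr_obj R j) n (j + s) -> Prop with
  | 0 => fun _ => True
  | j'.+1 => fun f => delta (homK (pr_d R j') f) = 0 end.

Lemma cyc_of_delta j (g : K (pr_obj R j) n (j + s)) (f : K (pr_obj R j.+1) n (j.+1 + s)) :
  delta g = homK (pr_d R j) f -> cyc g.
Proof.
case: j g f => [//|j] g f E /=.
by rewrite -delta_nat E ddK.
Qed.

Lemma Dec j (f : K (pr_obj R j) n (j + s)) : (j + s < n)%N -> cyc f ->
  exists c : K (pr_obj R j.+1) n (j + s), delta (f - homK (pr_d R j) c) = 0.
Proof.
elim: j f => [|j IH] f jn cf.
  have [c Hc] : exists c, homK (pr_d R 0) c = f.
    apply: (lift_exact (@pr_exact0 _ _ _ R)); apply/ffunP => S; rewrite !ffunE.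
    exact: Vs0.
  by exists c; rewrite Hc subrr delta0.
have [g Hg] := proj_exact (@pr_proj _ _ _ R j) jn cf.
have cg : cyc g by apply: (cyc_of_delta Hg).
have [c'' Hc''] := IH g (ltnW jn) cg.
have [c' Hc'] : exists c', homK (pr_d R j.+1) c' = f - delta c''.
  apply: (lift_exact (@pr_exactS _ _ _ R j)).
  by rewrite homKB delta_nat -Hg -deltaB.
by exists c'; rewrite Hc' opprB addrC subrK delta_delta.
Qed.

End Chase.

Lemma vanish_main (k : comPzRingType) (G : groupType) (V : FIGmod k G) (R : FIGprojres V)
  j s : (forall v : V s, v = 0) -> FIGhomol_vanish R j.+1 (j.+1 + s).
Proof.
move=> Vs0 x /= cx.
have [w Hw] := lower_delta cx.
pose a0 : K (pr_obj R j.+1) (j + s).+1 (j.+1 + s) := [ffun _ => x].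
have Hwa : delta w = homK (pr_d R j) a0 by rewrite Hw; apply/ffunP => S; rewrite !ffunE.
have [c'' Hc''] := Dec Vs0 (ltnSn (j + s)) (cyc_of_delta Hwa).
have [c Hc] : exists c, homK (pr_d R j.+1) c = a0 - delta c''.
  apply: (lift_exact (@pr_exactS _ _ _ R j)).
  by rewrite homKB delta_nat -Hwa -deltaB.
have cT : #|[set: 'I_(j + s).+1]| == (j + s).+1 by rewrite cardsT card_ord.
pose T : Sb (j + s).+1 (j + s).+1 := Sub [set: 'I_(j + s).+1] cT.
exists (c T), (delta c'' T); split; first exact: delta_lower.
move/ffunP: Hc => /(_ T); rewrite !ffunE => ->.
by rewrite subrK.
Qed.

Theorem mainTheorem13 (k : comPzRingType) (G : groupType) (V : FIGmod k G)
  (d : option nat) :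
  FIGdeg_is V d ->
  forall (R : FIGprojres V) (i : nat), (1 <= i)%N ->
    FIGhd_le R i (addno i d).
Proof.
move=> [Hd _] R i i1 n.
case: i i1 => [//|j] _.
case: d Hd => [e|] Hd /= Hn.
- have jn : (j.+1 <= n)%N by move: Hn; rewrite -ltnNge; lia.
  rewrite -(subnKC jn); apply: vanish_main => v.
  apply/eqP; apply: contraT => v0.
  have := Hd (n - j.+1)%N (ex_intro _ v (fun E => negP v0 (introT eqP E))).
  by move: Hn; rewrite /= -ltnNge; lia.
- apply: vanish_V0 => m v; apply/eqP; apply: contraT => v0.
  by have := Hd m (ex_intro _ v (fun E => negP v0 (introT eqP E))).
Qed.
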